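(* For every forest $F$, $A(F)=\{x\in T(r_1;F): P(x)\succ\max\{\tfrac12P(r_1),P(r_2)\}\}$, where $P(x)\succ\frac12P(r_1)$ means $P(x)>\frac12P(r_1)$ or ($P(x)=\frac12P(r_1)$ and $x<r_1$), and $P(x)\succ P(r_2)$ means $P(x)>P(r_2)$ or ($P(x)=P(r_2)$ and $x<r_2$).
   Context: Let $N$ be a finite, totally ordered set of vertices. A directed forest on $N$ is a directed acyclic graph on $N$ with every out-degree at most $1$. For a forest $F$: roots are vertices with no out-edge; $T(x;F)$ is the subtree rooted at $x$ (vertices with a directed path to $x$, including $x$); $P(x)=|T(x;F)|$; $F_x$ is $F$ with the out-edge of $x$ removed (if any). Write $P(x)\succ P(y)$ iff $P(x)>P(y)$ or ($P(x)=P(y)$ and $x<y$); let $r_1,r_2,\dots$ be the roots of $F$ in decreasing $\succ$-order, and $r_1(F')$ the $\succ$-maximal root of a forest $F'$. $A(F)=\{x\in N: x=r_1(F_x)\}$. If $F$ has only one root, the condition involving $r_2$ is considered vacuous. *)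

(* Defs.v *)
From mathcomp Require Import all_boot all_order.
Set Implicit Arguments. Unset Strict Implicit. Unset Printing Implicit Defensive.
Import Order.TTheory.

(* A directed graph on T with out-degree <= 1 is encoded by its "parent"
   function F : T -> option T  (F x = Some y  iff  x -> y is an edge). *)
Definition edge (T : finType) (F : T -> option T) : rel T :=
  fun y z => F y == Some z.

Definition acyclic (T : finType) (F : T -> option T) : Prop :=
  forall x y, F x = Some y -> ~~ connect (edge F) y x.

Definition subtree (T : finType) (F : T -> option T) (x : T) : {set T} :=
  [set y | connect (edge F) y x].

Definition P (T : finType) (F : T -> option T) (x : T) : nat := #|subtree F x|.

Definition is_root (T : finType) (F : T -> option T) (x : T) : bool :=
  F x == None.

Definition succP d (T : finOrderType d) (F : T -> option T) (x y : T) : bool :=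
  (P F y < P F x)%N || ((P F x == P F y) && (x < y)%O).

Definition is_r1 d (T : finOrderType d) (F : T -> option T) (r : T) : Prop :=
  is_root F r /\ forall r', is_root F r' -> r' != r -> succP F r r'.

Definition is_r2 d (T : finOrderType d) (F : T -> option T) (r1 r2 : T) : Prop :=
  [/\ is_root F r2, r2 != r1 &
      forall r', is_root F r' -> r' != r1 -> r' != r2 -> succP F r2 r'].

Definition cut (T : finType) (F : T -> option T) (x : T) : T -> option T :=
  fun y => if y == x then None else F y.

Definition inA d (T : finOrderType d) (F : T -> option T) (x : T) : Prop :=
  is_r1 (cut F x) x.

(* Main.v *)
Require Import Defs.
From mathcomp Require Import all_boot all_order.
From mathcomp Require Import zify.
Import Order.TTheory.
Set Implicit Arguments. Unset Strict Implicit.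

Section Gen.
Variable T : finType.

Lemma connect_step (G : T -> option T) y w :
  connect (edge G) y w -> w = y \/ exists2 u, G y = Some u & connect (edge G) u w.
Proof.
case/connectP=> [[|u p]] /= => [_ -> | /andP [e pp] ->]; first by left.
right; exists u; first by apply/eqP.
by apply/connectP; exists p.
Qed.

Lemma root_connect (G : T -> option T) z w :
  G z = None -> connect (edge G) z w -> w = z.
Proof. by move=> Hz /connect_step [//|[u]]; rewrite Hz. Qed.

Lemma connect_det (G : T -> option T) y z w :
  connect (edge G) y z -> connect (edge G) y w ->
  connect (edge G) z w || connect (edge G) w z.
Proof.
case/connectP=> p; elim: p y => [|u p IH] y /=.
  by move=> _ -> ->.
case/andP=> /eqP e pp Hz Hw.
case: (connect_step Hw) => [Ew|[u' e' cw]].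
  subst w; apply/orP; right; apply/connectP; exists (u :: p) => //=.
  by rewrite pp andbT; apply/eqP.
rewrite e in e'; case: e' => <- in cw.
exact: (IH u pp Hz cw).
Qed.

Lemma acyc_antisym (G : T -> option T) y z :
  acyclic G -> connect (edge G) y z -> connect (edge G) z y -> y = z.
Proof.
move=> ac Hyz Hzy; case: (connect_step Hyz) => [//|[u e cu]].
have := ac _ _ e; rewrite (connect_trans cu Hzy) //.
Qed.

Lemma subtree_sub (G : T -> option T) u w :
  connect (edge G) u w -> subtree G u \subset subtree G w.
Proof.
move=> cuw; apply/subsetP => y; rewrite !inE => cyu.
exact: connect_trans cyu cuw.
Qed.

Lemma P_gt0 (G : T -> option T) z : (0 < P G z)%N.
Proof. by apply/card_gt0P; exists z; rewrite inE connect0. Qed.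

Lemma P_le (G : T -> option T) u w :
  connect (edge G) u w -> (P G u <= P G w)%N.
Proof. by move=> c; apply: subset_leq_card; apply: subtree_sub. Qed.

Lemma P_lt (G : T -> option T) v w :
  acyclic G -> connect (edge G) v w -> v != w -> (P G v < P G w)%N.
Proof.
move=> ac c nvw; case: (connect_step c) => [Ew|[u e cu]].
  by rewrite Ew eqxx in nvw.
apply: (leq_trans _ (P_le cu)).
apply: proper_card; apply/properP; split.
  apply: subtree_sub; apply: connect1; rewrite /edge e //.
exists u; first by rewrite inE connect0.
by rewrite inE; apply: ac.
Qed.

Lemma root_exists (G : T -> option T) v :
  acyclic G -> exists2 r, G r = None & connect (edge G) v r.
Proof.
move=> ac.
have H : forall n v, (#|T| - P G v <= n)%N -> exists2 r, G r = None & connect (edge G) v r.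
  elim=> [|n IH] v' Hn; case Ev: (G v') => [w|].
  - have c : connect (edge G) v' w by apply: connect1; rewrite /edge Ev.
    have nvw : v' != w by apply/eqP => E; have := ac _ _ Ev; rewrite E connect0.
    have h2 := P_lt ac c nvw.
    have h1 : (P G w <= #|T|)%N by apply: max_card.
    lia.
  - by exists v' => //; rewrite connect0.
  - have c : connect (edge G) v' w by apply: connect1; rewrite /edge Ev.
    have nvw : v' != w by apply/eqP => E; have := ac _ _ Ev; rewrite E connect0.
    have h2 := P_lt ac c nvw.
    have [r Hr cr] : exists2 r, G r = None & connect (edge G) w r.
      by apply: IH; lia.
    by exists r => //; apply: connect_trans c cr.
  - by exists v' => //; rewrite connect0.
exact: (H _ v (leqnn _)).
Qed.

Variable G : T -> option T.
Variable x : T.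

Lemma cut_sub y z : connect (edge (cut G x)) y z -> connect (edge G) y z.
Proof.
apply: connect_sub => a b; rewrite /edge /cut => e; apply: connect1.
by move: e; case: (a == x).
Qed.

Lemma cut_split y z : connect (edge G) y z ->
  connect (edge (cut G x)) y z \/
  (connect (edge (cut G x)) y x /\ connect (edge G) x z).
Proof.
case/connectP=> p; elim: p y => [|u p IH] y /=.
  by move=> _ ->; left; rewrite connect0.
case/andP=> e pp Hz.
case: (eqVneq y x) => [Eyx|nyx].
  right; split; first by rewrite Eyx connect0.
  rewrite -Eyx; apply/connectP; exists (u :: p) => //=; by rewrite e.
have e' : edge (cut G x) y u by rewrite /edge /cut (negbTE nyx).
case: (IH u pp Hz) => [c|[c1 c2]].
  by left; apply: connect_trans (connect1 e') c.
by right; split=> //; apply: connect_trans (connect1 e') c1.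
Qed.

Lemma cut_to_x y : connect (edge G) y x -> connect (edge (cut G x)) y x.
Proof. by case/cut_split=> [|[]]. Qed.

Lemma P_cut_x : P (cut G x) x = P G x.
Proof.
rewrite /P /subtree; apply: eq_card => y; rewrite !inE.
apply/idP/idP; [exact: cut_sub | exact: cut_to_x].
Qed.

Lemma P_cut_far z : ~~ connect (edge G) x z -> P (cut G x) z = P G z.
Proof.
move=> nc; rewrite /P /subtree; apply: eq_card => y; rewrite !inE.
apply/idP/idP; first exact: cut_sub.
by case/cut_split=> [//|[_ c]]; rewrite c in nc.
Qed.

Lemma P_cut_near z : acyclic G -> connect (edge G) x z -> z != x ->
  P G z = (P (cut G x) z + P G x)%N.
Proof.
move=> ac cxz nzx.
have E : subtree G z = subtree (cut G x) z :|: subtree G x.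
  apply/setP => y; rewrite !inE; apply/idP/idP.
    by case/cut_split=> [->//|[c _]]; rewrite (cut_sub c) orbT.
  case/orP; first exact: cut_sub.
  by move=> c; apply: connect_trans c cxz.
have D : subtree (cut G x) z :&: subtree G x = set0.
  apply/setP => y; rewrite !inE; apply/negP => /andP [c1 /cut_to_x c2].
  case/orP: (connect_det c1 c2) => c.
    have := acyc_antisym ac cxz (cut_sub c); by move=> E'; rewrite E' eqxx in nzx.
  have Hx : cut G x x = None by rewrite /cut eqxx.
  by have := root_connect Hx c; move=> E'; rewrite E' eqxx in nzx.
by rewrite /P E -cardsUI D cards0 addn0.
Qed.

End Gen.

Section Ord.
Variables (d : Order.disp_t) (T : finOrderType d) (F : T -> option T).

Lemma succP_asym a b : succP F a b -> ~~ succP F b a.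
Proof.
rewrite /succP; case: (ltgtP a b) => h; rewrite ?andbT ?andbF ?orbF; lia.
Qed.

Lemma succP_trans a b c : succP F a b -> succP F b c -> succP F a c.
Proof.
rewrite /succP => /orP [h1|/andP [/eqP h1 h1']] /orP [h2|/andP [/eqP h2 h2']].
- apply/orP; left; lia.
- apply/orP; left; lia.
- apply/orP; left; lia.
- by apply/orP; right; rewrite h1 h2 eqxx (lt_trans h1' h2').
Qed.

Lemma succP_total a b : a != b -> succP F a b || succP F b a.
Proof.
move=> nab; rewrite /succP; case: (ltgtP a b) => h.
- rewrite andbT andbF; lia.
- rewrite andbT andbF; lia.
- by rewrite h eqxx in nab.
Qed.

Lemma seq_max (s : seq T) : s = [::] \/
  exists2 m, m \in s & forall y, y \in s -> y != m -> succP F m y.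
Proof.
elim: s => [|a s IH]; first by left.
right; case: IH => [->|[m ms Hm]].
  by exists a; rewrite ?inE ?eqxx // => y; rewrite inE => ->.
case: (eqVneq a m) => [Eam|nam].
  exists m; first by rewrite inE ms orbT.
  by move=> y; rewrite inE -Eam => /orP [->//|ys]; rewrite Eam; apply: Hm.
case/orP: (succP_total nam) => h.
  exists a; first by rewrite inE eqxx.
  move=> y; rewrite inE => /orP [->//|ys] nya.
  case: (eqVneq y m) => [->//|nym]; exact: succP_trans h (Hm _ ys nym).
exists m; first by rewrite inE ms orbT.
move=> y; rewrite inE => /orP [/eqP->//|ys]; exact: Hm.
Qed.

Lemma succP_ext (G : T -> option T) a b :
  P G a = P F a -> P G b = P F b -> succP G a b = succP F a b.
Proof. by rewrite /succP => -> ->. Qed.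

End Ord.

Theorem claim2 (d : Order.disp_t) (T : finOrderType d) (F : T -> option T) (r1 : T) :
  acyclic F -> is_r1 F r1 ->
  forall x : T,
    inA F x <->
    [/\ x \in subtree F r1,
        (P F r1 < 2 * P F x)%N || ((2 * P F x == P F r1) && (x < r1)%O)
      & forall r2, is_r2 F r1 r2 -> succP F x r2].
Proof.
move=> ac [r1root r1max] x.
have Hr1 : F r1 = None by apply/eqP.
have le_succ : forall (G : T -> option T) (a b : T), succP G a b -> (P G b <= P G a)%N.
  move=> G a b; rewrite /succP => /orP [h|/andP [/eqP h _]]; lia.
case Ex: (F x) => [y|]; last first.
  have Ecut : forall z, cut F x z = F z.
    by move=> z; rewrite /cut; case: eqP => // ->; rewrite Ex.
  have Ee : edge (cut F x) =2 edge F by move=> a b; rewrite /edge Ecut.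
  have EP : forall z, P (cut F x) z = P F z.
    move=> z; rewrite /P /subtree; apply: eq_card => w; rewrite !inE.
    by rewrite (eq_connect Ee).
  have Hir : inA F x <-> is_r1 F x.
    rewrite /inA /is_r1 /is_root; split => [[h1 h2]|[h1 h2]]; split.
    - by rewrite -Ecut.
    - by move=> r' hr' nr'; rewrite -(succP_ext (EP _) (EP _)); apply: h2; rewrite // Ecut.
    - by rewrite Ecut.
    - by move=> r' hr' nr'; rewrite (succP_ext (EP _) (EP _)); apply: h2; rewrite // -Ecut.
  rewrite Hir; split.
  - case=> _ h.
    have Ex1 : x = r1.
      apply/eqP/negPn/negP => nx.
      have nx' : r1 != x by rewrite eq_sym.
      have h1 := h r1 r1root nx'.
      have xr : is_root F x by rewrite /is_root Ex.
      have h2 := r1max x xr nx.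
      by have := succP_asym h1; rewrite h2.
    subst x; split.
    + by rewrite inE connect0.
    + by apply/orP; left; have := P_gt0 F r1; lia.
    + by move=> r2 [h1 h2 _]; apply: r1max.
  - case=> xin _ _; rewrite inE in xin.
    have E := root_connect Ex xin; subst r1; by split.
have nxroot : ~~ is_root F x by rewrite /is_root Ex.
have rootc : forall z, is_root (cut F x) z = (z == x) || is_root F z.
  by move=> z; rewrite /is_root /cut; case: (z == x).
have Pcx := P_cut_x F x.
case: (boolP (connect (edge F) x r1)) => cx.
  have nx1 : r1 != x by apply/eqP => E; rewrite -E Hr1 in Ex.
  have Pc1 := P_cut_near ac cx nx1.
  have key : succP (cut F x) x r1 =
     ((P F r1 < 2 * P F x)%N || ((2 * P F x == P F r1) && (x < r1)%O)).
    rewrite /succP Pcx Pc1; case: (x < r1)%O; rewrite ?andbT ?andbF ?orbF; lia.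
  have far : forall z, is_root F z -> z != r1 -> P (cut F x) z = P F z.
    move=> z hz nz; apply: P_cut_far; apply/negP => cxz.
    have hz' : F z = None by apply/eqP.
    case/orP: (connect_det cx cxz) => c.
      by have := root_connect Hr1 c => E; rewrite E eqxx in nz.
    by have := root_connect hz' c => E; rewrite E eqxx in nz.
  split.
  - case=> _ h; split.
    + by rewrite inE.
    + by rewrite -key; apply: h; rewrite // rootc r1root orbT.
    + move=> r2 [h1 h2 _].
      have n2x : r2 != x by apply/eqP => E; rewrite E in h1; rewrite h1 in nxroot.
      rewrite -(succP_ext Pcx (far r2 h1 h2)); apply: h => //.
      by rewrite rootc h1 orbT.
  - case=> _ k h3; split; first by rewrite /is_root /cut eqxx.
    move=> r' hr' nr'.
    have hr'F : is_root F r' by move: hr'; rewrite rootc (negbTE nr').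
    case: (eqVneq r' r1) => [->|n1]; first by rewrite key.
    rewrite (succP_ext Pcx (far r' hr'F n1)).
    have r's : r' \in [seq z <- enum T | is_root F z && (z != r1)].
      by rewrite mem_filter mem_enum hr'F n1.
    case: (seq_max F [seq z <- enum T | is_root F z && (z != r1)]) => [E|[m ms Hm]].
      by rewrite E in r's.
    move: ms; rewrite mem_filter mem_enum andbT => /andP [mr mn].
    have Hm' : forall z, is_root F z -> z != r1 -> z != m -> succP F m z.
      by move=> z a b c; apply: Hm => //; rewrite mem_filter mem_enum a b.
    have hxm : succP F x m by apply: h3; split.
    case: (eqVneq r' m) => [->//|nm].
    by apply: succP_trans hxm (Hm' _ hr'F n1 nm).
split; last by case=> xin; rewrite inE in xin; rewrite xin in cx.
case=> _ h.
have nx1 : r1 != x by apply/eqP => E; rewrite E connect0 in cx.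
have r1c : is_root (cut F x) r1 by rewrite rootc r1root orbT.
have h1 := h r1 r1c nx1.
rewrite (succP_ext Pcx (P_cut_far cx)) in h1.
have [r Hr cxr] := root_exists x ac.
have nxr : x != r by apply/eqP => E; rewrite -E Ex in Hr.
have lt := P_lt ac cxr nxr.
have nr1 : r != r1 by apply/eqP => E; rewrite -E cxr in cx.
have rr : is_root F r by rewrite /is_root Hr.
have h2 := r1max r rr nr1.
have := le_succ _ _ _ h1; have := le_succ _ _ _ h2; lia.
Qed.
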